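(* Let $\hat A$ be a complete discrete valuation ring with maximal ideal $\mathfrak p$, let $n$ be a positive integer, and let $H_n$ be the ideal of $\hat A$ generated by all $x^n-1$ with $x\in\hat A^\times$. Then an ideal $I$ of $\hat A$ is $n$-congruing if and only if $H_n\subseteq I$.
   Context: An ideal $I$ of a commutative ring $R$ is $n$-congruing if for every $a\in R$ there is $N\in\mathbb{N}$ with $a^N(a^n-1)\in I$. *)

(* Defs.v *)
From HB Require Import structures.
From mathcomp Require Import all_boot all_order all_algebra.
Set Implicit Arguments. Unset Strict Implicit. Unset Printing Implicit Defensive.
Import GRing.Theory.
Local Open Scope ring_scope.

Definition is_ideal (R : comNzRingType) (I : R -> Prop) : Prop :=
  [/\ I 0,
      (forall x y, I x -> I y -> I (x + y)) &
      (forall r x, I x -> I (r * x))].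

Definition n_congruing (R : comNzRingType) (n : nat) (I : R -> Prop) : Prop :=
  forall a : R, exists N : nat, I (a ^+ N * (a ^+ n - 1)).

(* The ideal H_n generated by all x^n - 1 with x a unit: the set of finite
   R-linear combinations  sum_i c_i (x_i^n - 1)  with all x_i units. *)
Definition H_ideal (R : comUnitRingType) (n : nat) (y : R) : Prop :=
  exists s : seq (R * R),
    all (fun cx => cx.2 \is a GRing.unit) s /\
    y = \sum_(cx <- s) cx.1 * (cx.2 ^+ n - 1).

(* Discrete valuation ring, via a uniformizer: a nonzero nonunit p such that
   every nonzero element is (unit) * p^k.  The maximal ideal is then pR. *)
Definition is_uniformizer (R : idomainType) (p : R) : Prop :=
  [/\ p != 0, p \isn't a GRing.unit &
      forall x : R, x != 0 ->
        exists (u : R) (k : nat), u \is a GRing.unit /\ x = u * p ^+ k].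

Definition in_pow_ideal (R : comNzRingType) (p : R) (k : nat) (x : R) : Prop :=
  exists c : R, x = c * p ^+ k.

(* Completeness for the p-adic (= maximal-ideal-adic) topology:
   every p-adically Cauchy sequence converges p-adically. *)
Definition padic_complete (R : comNzRingType) (p : R) : Prop :=
  forall a : nat -> R,
    (forall k : nat, exists N : nat, forall m l : nat,
        (N <= m)%N -> (N <= l)%N -> in_pow_ideal p k (a m - a l)) ->
    exists L : R, forall k : nat, exists N : nat, forall m : nat,
        (N <= m)%N -> in_pow_ideal p k (a m - L).

Definition complete_DVR (R : idomainType) : Prop :=
  exists p : R, is_uniformizer p /\ padic_complete p.

(* Main.v *)
Require Import Defs.
From HB Require Import structures.
From mathcomp Require Import all_boot all_order all_algebra.
Import GRing.Theory.
Local Open Scope ring_scope.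

Section Aux.
Variable R : idomainType.
Variable p : R.
Hypothesis hp : is_uniformizer p.

Lemma unit_1pc (c : R) : (1 + p * c) \is a GRing.unit.
Proof.
case: hp => p0 pnu hfac.
have pnu' : forall y, p * y <> 1.
  by move=> y hy; move/negP: pnu; apply; apply/unitrPr; exists y.
have [e0|ne0] := eqVneq (1 + p * c) 0.
  exfalso; apply: (pnu' (- c)); rewrite mulrN.
  by rewrite -[RHS](addrK (p * c)) e0 sub0r.
have [u [k [hu he]]] := hfac _ ne0.
case: k he => [|k] he; first by rewrite he expr0 mulr1.
exfalso; apply: (pnu' (u * p ^+ k - c)).
rewrite exprS in he.
by rewrite mulrBr mulrCA -he addrK.
Qed.

Lemma key : forall i d, p ^+ i = p ^+ (i + d) -> d = 0%N.
Proof.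
case: hp => p0 pnu _.
  move=> i' d e.
  have h1 : p ^+ i' * p ^+ d = p ^+ i' * 1.
    by rewrite mulr1 -exprD -e.
  have h2 := mulfI (expf_neq0 i' p0) h1.
  case: d h1 h2 e => [//|d] _ h2 _.
  move: pnu; rewrite -(unitrX_pos p (ltn0Sn d)) h2 unitr1.
  move=> H; exfalso; exact: (negP H).
Qed.
Lemma pow_inj (i j : nat) : p ^+ i = p ^+ j -> i = j.
Proof.
move=> e; have [l|l] := leqP i j.
  have := @key i (j - i)%N; rewrite subnKC //.
  move=> /(_ e) /eqP; rewrite subn_eq0 => l2; apply/eqP; rewrite eqn_leq l l2 //.
have := @key j (i - j)%N; rewrite subnKC; last exact: ltnW.
move=> /(_ (esym e)) /eqP; rewrite subn_eq0 leqNgt l //.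
Qed.
Lemma exists_nontriv (n : nat) : (0 < n)%N ->
  exists x : R, x \is a GRing.unit /\ x ^+ n - 1 != 0.
Proof.
move=> hn.
pose rs := [seq 1 + p ^+ j.+1 | j <- iota 0 n.+1].
have hq : ('X^n - (1 : R)%:P) != 0.
  by rewrite -size_poly_eq0 size_XnsubC.
have [hall|] := boolP (all (root ('X^n - (1:R)%:P)) rs).
  exfalso.
  have hu : uniq rs.
    rewrite map_inj_uniq; first exact: iota_uniq.
    by move=> i j /addrI /pow_inj [].
  have := max_poly_roots hq hall hu.
  by rewrite size_XnsubC // size_map size_iota ltnn.
case/allPn => x /mapP [j _ ->] hr.
exists (1 + p ^+ j.+1); split; first by rewrite exprS unit_1pc.
by move: hr; rewrite /root !hornerE.
Qed.

End Aux.
Theorem mainTheorem12 (R : idomainType) (hR : complete_DVR R)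
  (n : nat) (hn : (0 < n)%N) (I : R -> Prop) (hI : is_ideal I) :
  n_congruing n I <-> (forall y : R, H_ideal n y -> I y).
Proof.
case: hI => I0 ID IM.
split.
  move=> hc y [s [hs ->]].
  elim: s hs => [|[c x] s IH] /=; first by rewrite big_nil.
  case/andP => /= xu hs; rewrite big_cons; apply: (ID); last exact: IH.
  apply: (IM); have [N hN] := hc x.
  have -> : x ^+ n - 1 = (x ^+ N)^-1 * (x ^+ N * (x ^+ n - 1)).
    by rewrite mulKr // unitrX.
  exact: (IM _ _ hN).
move=> hH.
have Hel : forall x : R, x \is a GRing.unit -> I (x ^+ n - 1).
  move=> x xu; apply: hH; exists [:: (1, x)]; split; first by rewrite /= xu.
  by rewrite big_cons big_nil /= mul1r addr0.
case: hR => p [hp _].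
have [x [xu xne]] := @exists_nontriv _ _ hp _ hn.
have [_ pnu hfac] := hp.
have [u [m [uu ue]]] := hfac _ xne.
have Ipm : forall c, I (c * p ^+ m).
  move=> c; have -> : c * p ^+ m = (c * u^-1) * (x ^+ n - 1).
    by rewrite ue mulrA mulrVK.
  by apply: (IM); apply: Hel.
move=> a.
have [->|a0] := eqVneq a 0.
  by exists 1%N; rewrite expr1 mul0r.
have [v [k [vu ->]]] := hfac _ a0.
case: k => [|k].
  exists 0%N; rewrite expr0 mul1r; apply: Hel; by rewrite expr0 mulr1.
exists m.
rewrite exprMn exprS exprMn.
rewrite mulrA [v ^+ m * p ^+ m]mulrC -!mulrA mulrC.
exact: Ipm.
Qed.
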